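(* For $z,\zeta \in \mathbb C\setminus \mathbb R$, $z \ne \overline \zeta$, \[ \frac{\mathcal P(z)-\mathcal P(\zeta)^*}{z-\overline{\zeta}} = \binom{\mathcal B^*}{-\mathcal A^*} \big(\mathcal M(\zeta)^*\mathcal B^*-\mathcal A^*\big)^{-1} \frac{\mathcal M(z)-\mathcal M(\zeta)^*}{z-\overline \zeta} \big(\mathcal B\,\mathcal M(z)-\mathcal A\big)^{-1} \big( \mathcal B \ \ -\mathcal A \big). \]
   Context: Let $\mathcal A,\mathcal B\in M_n(\mathbb C)$ with ${\rm rank}(\mathcal A\ \mathcal B)=n$ and $\mathcal A\mathcal B^*=\mathcal B\mathcal A^*$. Let $\mathcal M(z)={\rm diag}(m_1(z),\dots,m_n(z))$, where $m_j$ are the Weyl–Titchmarsh functions of Dirac-Krein operators on the edges $e_j=[v,v_j]$ of a star graph (each $m_j$ is a meromorphic Nevanlinna function with $\operatorname{Im} m_j(z)>0$ for $\operatorname{Im} z>0$), so that $\mathcal B\mathcal M(z)-\mathcal A$ is invertible for $z\in\mathbb C\setminus\mathbb R$. Define the $2n\times2n$ matrix function $\mathcal P(z) := \begin{pmatrix}0_n&0_n\\0_n&\mathcal M(z)\end{pmatrix} - \begin{pmatrix}-I_n\\\mathcal M(z)\end{pmatrix}\big(\mathcal B\mathcal M(z)-\mathcal A\big)^{-1} \mathcal B \,\big(-I_n \ \ \mathcal M(z) \big)$. *)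

(* Defs.v *)
From HB Require Import structures.
From mathcomp Require Import all_boot all_order all_algebra.
From mathcomp Require Import complex.
Set Implicit Arguments. Unset Strict Implicit. Unset Printing Implicit Defensive.
Import Order.TTheory GRing.Theory Num.Theory.
Local Open Scope ring_scope.

Definition adjmx (C : numClosedFieldType) (m n : nat) (X : 'M[C]_(m, n)) : 'M[C]_(n, m) :=
  (map_mx Num.conj X)^T.

Definition Mdiag (C : numClosedFieldType) (n : nat) (m : 'I_n -> C -> C) (z : C) : 'M[C]_n :=
  diag_mx (\row_j m j z).

Definition Pmx (C : numClosedFieldType) (n : nat) (A B : 'M[C]_n)
  (m : 'I_n -> C -> C) (z : C) : 'M[C]_(n + n) :=
  block_mx 0 0 0 (Mdiag m z)
  - col_mx (- 1%:M) (Mdiag m z) *m invmx (B *m Mdiag m z - A) *m B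
      *m row_mx (- 1%:M) (Mdiag m z).

(* Main.v *)
Require Import Defs.
From HB Require Import structures.
From mathcomp Require Import all_boot all_order all_algebra.
From mathcomp Require Import complex.
Import Order.TTheory GRing.Theory Num.Theory.
Local Open Scope ring_scope.
Set Warnings "-notation-overridden".

Section Adj.
Variable C : numClosedFieldType.

Lemma adjmxM m n p (X : 'M[C]_(m, n)) (Y : 'M[C]_(n, p)) :
  adjmx (X *m Y) = adjmx Y *m adjmx X.
Proof. by rewrite /adjmx map_mxM trmx_mul. Qed.

Lemma adjmxD m n (X Y : 'M[C]_(m, n)) : adjmx (X + Y) = adjmx X + adjmx Y.
Proof. by rewrite /adjmx map_mxD linearD. Qed.

Lemma adjmxN m n (X : 'M[C]_(m, n)) : adjmx (- X) = - adjmx X.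
Proof. by rewrite /adjmx map_mxN linearN. Qed.

Lemma adjmxB m n (X Y : 'M[C]_(m, n)) : adjmx (X - Y) = adjmx X - adjmx Y.
Proof. by rewrite adjmxD adjmxN. Qed.

Lemma adjmx1 n : adjmx (1%:M : 'M[C]_n) = 1%:M.
Proof. by rewrite /adjmx map_mx1 trmx1. Qed.

Lemma adjmx0 m n : adjmx (0 : 'M[C]_(m, n)) = 0.
Proof. by rewrite /adjmx map_mx0 trmx0. Qed.

Lemma adjmxK m n (X : 'M[C]_(m, n)) : adjmx (adjmx X) = X.
Proof.
rewrite /adjmx; apply/matrixP => i j; rewrite !mxE; exact: conjCK.
Qed.

Lemma adjmx_inv n (X : 'M[C]_n) : adjmx (invmx X) = invmx (adjmx X).
Proof. by rewrite /adjmx map_invmx trmx_inv. Qed.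

Lemma adjmx_unit n (X : 'M[C]_n) : (adjmx X \in unitmx) = (X \in unitmx).
Proof. by rewrite /adjmx unitmx_tr map_unitmx. Qed.

Lemma adjmx_block m1 m2 n1 n2 (a : 'M[C]_(m1, n1)) (b : 'M[C]_(m1, n2))
  (c : 'M[C]_(m2, n1)) (d : 'M[C]_(m2, n2)) :
  adjmx (block_mx a b c d) = block_mx (adjmx a) (adjmx c) (adjmx b) (adjmx d).
Proof. by rewrite /adjmx map_block_mx tr_block_mx. Qed.

Lemma adjmx_col m1 m2 n (a : 'M[C]_(m1, n)) (b : 'M[C]_(m2, n)) :
  adjmx (col_mx a b) = row_mx (adjmx a) (adjmx b).
Proof. by rewrite /adjmx map_col_mx tr_col_mx. Qed.

Lemma adjmx_row m n1 n2 (a : 'M[C]_(m, n1)) (b : 'M[C]_(m, n2)) :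
  adjmx (row_mx a b) = col_mx (adjmx a) (adjmx b).
Proof. by rewrite /adjmx map_row_mx tr_row_mx. Qed.

End Adj.

Section Alg.
Variable F : fieldType.
Variable n : nat.
Implicit Types (A B As Bs P Q X Y : 'M[F]_n).

Lemma GL P Q : P \in unitmx -> Q \in unitmx ->
  invmx Q *m (P - Q) *m invmx P = invmx Q - invmx P.
Proof.
move=> uP uQ; rewrite mulmxBr mulVmx // mulmxBl mul1mx mulmxK //.
Qed.

Lemma KBW A B As Bs P : A *m Bs = B *m As ->
  B *m P - A \in unitmx ->
  invmx (B *m P - A) *m B *m (P *m Bs - As) = Bs.
Proof.
move=> hs uK.
have e : (B *m P - A) *m Bs = B *m (P *m Bs - As)
  by rewrite mulmxBl mulmxBr mulmxA hs.
by rewrite -mulmxA -e mulmxA mulVmx // mul1mx.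
Qed.

Lemma KB A B As Bs P : A *m Bs = B *m As ->
  B *m P - A \in unitmx -> P *m Bs - As \in unitmx ->
  invmx (B *m P - A) *m B = Bs *m invmx (P *m Bs - As).
Proof.
move=> hs uK uG.
by rewrite -[LHS](mulmxK uG) KBW.
Qed.

End Alg.

Lemma unitW (C : numClosedFieldType) n (A B P : 'M[C]_n) :
  \rank (row_mx A B) = n -> A *m adjmx B = B *m adjmx A ->
  B *m P - A \in unitmx -> P *m adjmx B - adjmx A \in unitmx.
Proof.
move=> hr hs uK.
have /row_freeP [X hX] : row_free (row_mx A B) by rewrite /row_free hr.
move: hX; rewrite -[X]vsubmxK mul_row_col => hX.
have hX' : adjmx (usubmx X) *m adjmx A + adjmx (dsubmx X) *m adjmx B = 1%:M.
  by rewrite -!adjmxM -adjmxD hX adjmx1.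
set W := P *m adjmx B - adjmx A.
set K := invmx (B *m P - A).
have e1 : K *m B *m W = adjmx B by exact: KBW.
have e2 : (P *m K *m B - 1%:M) *m W = adjmx A.
  by rewrite mulmxBl mul1mx -!mulmxA (mulmxA K) e1 /W opprB addrC addrNK.
have : (adjmx (usubmx X) *m (P *m K *m B - 1%:M) + adjmx (dsubmx X) *m (K *m B)) *m W = 1%:M.
  by rewrite mulmxDl -(mulmxA (adjmx (usubmx X))) e2 -(mulmxA (adjmx (dsubmx X))) e1.
by case/mulmx1_unit.
Qed.

Lemma zA (V : zmodType) (a b : V) : - a - - b = b - a.
Proof. by rewrite opprK addrC. Qed.
Lemma zB (V : zmodType) (c a b : V) : (c + a) - (c + b) = a - b.
Proof. by rewrite opprD addrACA subrr add0r. Qed.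
Lemma zC (V : zmodType) (M Ns x1 x2 x3 : V) :
  M - (M + x2) - (Ns - (Ns + x3)) = x1 - x2 - (x1 - x3).
Proof.
have h : forall a b : V, a - (a + b) = - b by move=> a b; rewrite opprD addrA subrr add0r.
by rewrite !h opprK opprB [RHS]addrC addrA subrK addrC.
Qed.

Lemma core (F : fieldType) n (A B As Bs M Ns : 'M[F]_n) :
  A *m Bs = B *m As ->
  B *m M - A \in unitmx -> Ns *m Bs - As \in unitmx ->
  M *m Bs - As \in unitmx -> B *m Ns - A \in unitmx ->
  (block_mx 0 0 0 M - col_mx (- 1%:M) M *m invmx (B *m M - A) *m B *m row_mx (- 1%:M) M)
  - (block_mx 0 0 0 Ns - col_mx (- 1%:M) Ns *m Bs *m invmx (Ns *m Bs - As) *m row_mx (- 1%:M) Ns)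
  = col_mx Bs (- As) *m invmx (Ns *m Bs - As) *m (M - Ns) *m invmx (B *m M - A)
     *m row_mx B (- A).
Proof.
move=> hs uK uL uG uE.
have hK := @KB _ _ A B As Bs M hs uK uG.
have hE := @KB _ _ A B As Bs Ns hs uE uL.
set K := invmx (B *m M - A) in hK *.
set L := invmx (Ns *m Bs - As) in hE *.
set G := invmx (M *m Bs - As) in hK *.
set E := invmx (B *m Ns - A) in hE *.
have I1 : E *m B *m (M - Ns) *m K = E - K.
  rewrite -(mulmxA E B).
  have -> : B *m (M - Ns) = (B *m M - A) - (B *m Ns - A).
    by rewrite mulmxBr opprB addrA subrK.
  by rewrite GL.
have I2 : forall p (X : 'M_(p, n)), X *m L *m (M - Ns) *m Bs *m G = X *m (L - G).
  move=> p X; have <- : L *m (M - Ns) *m Bs *m G = L - G.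
    rewrite -(mulmxA L (M - Ns) Bs).
    have -> : (M - Ns) *m Bs = (M *m Bs - As) - (Ns *m Bs - As).
      by rewrite mulmxBl opprB addrA subrK.
    by rewrite GL.
  by rewrite !mulmxA.
have f1 : K *m B *m M = 1%:M + K *m A.
  by rewrite -mulmxA -[K *m (B *m M)](addrNK (K *m A)) -mulmxBr mulVmx // addrC.
have f2 : E *m B *m Ns = 1%:M + E *m A.
  by rewrite -mulmxA -[E *m (B *m Ns)](addrNK (E *m A)) -mulmxBr mulVmx // addrC.
have f3 : M *m Bs *m G = 1%:M + As *m G.
  by rewrite -[M *m Bs *m G](addrNK (As *m G)) -mulmxBl mulmxV // addrC.
have f4 : Ns *m Bs *m L = 1%:M + As *m L.
  by rewrite -[Ns *m Bs *m L](addrNK (As *m L)) -mulmxBl mulmxV // addrC.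
rewrite !block_mxEv !mul_col_mx !mul_mx_row.
rewrite !(opp_col_mx, opp_row_mx, add_col_mx, add_row_mx).
rewrite ?mulNmx ?mulmxN ?mul1mx ?mulmx1 ?opprK ?sub0r ?add0r ?addr0 ?oppr0.
congr col_mx; congr row_mx.
- by rewrite -hE I1 mulmxBl zA.
- by rewrite -hE I1 f1 f2 mulmxBl opprB zB.
- rewrite -(mulmxA M K B) hK mulmxA f3 f4.
  by rewrite -(mulmxA _ K B) hK mulmxA I2 mulmxBr opprB zB.
- rewrite -(mulmxA M K B) hK mulmxA f3 mulmxDl mul1mx f4 mulmxDl mul1mx.
  have fA : K *m A = K *m B *m M - 1%:M by rewrite f1 addrAC subrr add0r.
  rewrite -(mulmxA _ K A) fA mulmxBr mulmx1 mulmxA hK mulmxA I2.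
  by rewrite mulmxBr mulmxBl mulmxBr (zC _ _ _ (As *m L *m M)).
Qed.

Theorem lemma4p3 (R : rcfType) (n : nat) (A B : 'M[R[i]]_n)
  (m : 'I_n -> R[i] -> R[i])
  (hrank : \rank (row_mx A B) = n)
  (hsym : A *m adjmx B = B *m adjmx A)
  (hnev : forall (j : 'I_n) (w : R[i]), 0 < 'Im w -> 0 < 'Im (m j w))
  (hrefl : forall (j : 'I_n) (w : R[i]), 'Im w != 0 -> m j (w^*) = (m j w)^*)
  (hinv : forall w : R[i], 'Im w != 0 -> B *m Mdiag m w - A \in unitmx)
  (z zeta : R[i]) (hz : 'Im z != 0) (hzeta : 'Im zeta != 0) (hzz : z != zeta^*) :
  (z - zeta^*)^-1 *: (Pmx A B m z - adjmx (Pmx A B m zeta))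
  = col_mx (adjmx B) (- adjmx A)
      *m invmx (adjmx (Mdiag m zeta) *m adjmx B - adjmx A)
      *m ((z - zeta^*)^-1 *: (Mdiag m z - adjmx (Mdiag m zeta)))
      *m invmx (B *m Mdiag m z - A)
      *m row_mx B (- A).
Proof.
rewrite -scalemxAr -!scalemxAl; congr (_ *: _).
have uK := hinv z hz.
have uN := hinv zeta hzeta.
have uG := @unitW _ _ A B _ hrank hsym uK.
have uN' := @unitW _ _ A B _ hrank hsym uN.
have uL : adjmx (Mdiag m zeta) *m adjmx B - adjmx A \in unitmx.
  by rewrite -adjmxM -adjmxB adjmx_unit.
have uE : B *m adjmx (Mdiag m zeta) - A \in unitmx.
  by rewrite -adjmx_unit adjmxB adjmxM adjmxK.
rewrite /Pmx adjmxB adjmx_block !adjmx0 !adjmxM adjmx_col adjmx_row adjmxN adjmx1.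
rewrite adjmx_inv adjmxB adjmxM !mulmxA.
exact: (@core _ n A B (adjmx A) (adjmx B) (Mdiag m z) (adjmx (Mdiag m zeta)) hsym uK uL uG uE).
Qed.
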